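(* Let $n\geq2$, $m\geq1$ be integers, $\alpha,\beta\in\mathbb{C}$, let $\psi\in\mathbb{R}$ satisfy $\beta-\alpha=|\beta-\alpha|e^{i\psi}$, and let $T^0_{\alpha,\beta}=e^{-i\psi}J_n(0)\oplus|\beta-\alpha|I_m\in M_{n+m}(\mathbb{C})$. Let $k\in\{1,\ldots,n\}$. Then for $\theta\in[0,2\pi]$, $$\lambda_k(\operatorname{Re}(e^{i\theta}T^0_{\alpha,\beta}))=\begin{cases}\cos\psi_{k,m}, & \theta\in C_{k,m},\\ |\beta-\alpha|\cos\theta, & \theta\in[0,2\pi]\setminus(D_k\cup C_{k,m}),\\ \cos\phi_k, & \theta\in D_k.\end{cases}$$
   Context: $J_n(0)$ is the $n\times n$ Jordan block with eigenvalue $0$ (ones on the superdiagonal, zeros elsewhere). For a square matrix $A$, $\operatorname{Re}A=(A+A^* )/2$, and $\lambda_1(A)\geq\lambda_2(A)\geq\cdots$ denote the eigenvalues of the Hermitian matrix in question, in non-increasing order counted with multiplicity. $\phi_k=\frac{k\pi}{n+1}$, $\psi_{k,m}=\frac{(k-m)\pi}{n+1}$; $D_k=\{\theta\in\mathbb{R}:\ |\beta-\alpha|\cos\theta\leq\cos\phi_k\}$; $C_{k,m}=\{\theta\in\mathbb{R}:\ |\beta-\alpha|\cos\theta>\cos\psi_{k,m}\}$ if $k>m$ and $C_{k,m}=\emptyset$ if $k\leq m$. *)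

(* Defs.v *)
From HB Require Import structures.
From mathcomp Require Import all_boot all_order all_algebra.
From mathcomp Require Import reals trigo.
From mathcomp Require Import complex.
Set Implicit Arguments. Unset Strict Implicit. Unset Printing Implicit Defensive.
Import Order.TTheory GRing.Theory Num.Theory.
Local Open Scope ring_scope.

Definition expi {R : realType} (t : R) : R[i] := Complex (cos t) (sin t).

Definition cabs {R : realType} (z : R[i]) : R := Normc.normc z.

Definition jordan0 {F : pzRingType} (n : nat) : 'M[F]_n :=
  \matrix_(i < n, j < n) (if (j : nat) == i.+1 then 1 else 0).

Definition dsum {F : pzRingType} (n m : nat) (A : 'M[F]_n) (B : 'M[F]_m)
  : 'M[F]_(n + m) := block_mx A 0 0 B.

Definition adjmx {R : realType} (N : nat) (A : 'M[R[i]]_N) : 'M[R[i]]_N :=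
  (map_mx Num.conj A)^T.
Definition ReMx {R : realType} (N : nat) (A : 'M[R[i]]_N) : 'M[R[i]]_N :=
  (2%:R)^-1 *: (A + adjmx A).

(* Eigenvalues with algebraic multiplicity: a list of the roots (counted with
   multiplicity) of the characteristic polynomial, which splits over the
   algebraically closed field R[i]. *)
Definition eigs_mult {R : realType} (N : nat) (A : 'M[R[i]]_N) : seq R[i] :=
  sval (closed_field_poly_normal (char_poly A)).

(* For a Hermitian matrix the eigenvalues are real; lam_desc A lists them
   (their real parts, which are the eigenvalues themselves) in
   non-increasing order with multiplicity. *)
Definition lam_desc {R : realType} (N : nat) (A : 'M[R[i]]_N) : seq R :=
  sort (fun x y : R => y <= x) [seq complex.Re z | z <- eigs_mult A].

(* lambda_k(A), k = 1, 2, ... (1-based). *)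
Definition lam {R : realType} (N : nat) (A : 'M[R[i]]_N) (k : nat) : R :=
  nth 0 (lam_desc A) k.-1.

Definition T0 {R : realType} (n m : nat) (alpha beta : R[i]) (psi : R)
  : 'M[R[i]]_(n + m) :=
  dsum (expi (- psi) *: jordan0 n) ((cabs (beta - alpha))%:C%C%:M).

Definition phi_ {R : realType} (n k : nat) : R := k%:R * pi / n.+1%:R.
Definition psi_ {R : realType} (n k m : nat) : R :=
  ((k%:R - m%:R) * pi / n.+1%:R).

(* D_k and C_{k,m} as predicates on theta (with |beta-alpha| = r). *)
Definition Dset {R : realType} (r : R) (n k : nat) (theta : R) : Prop :=
  r * cos theta <= cos (phi_ n k).
Definition Cset {R : realType} (r : R) (n k m : nat) (theta : R) : Prop :=
  (m < k)%N /\ r * cos theta > cos (psi_ n k m).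

(* Main.v *)
Require Import Defs.
From HB Require Import structures.
From mathcomp Require Import all_boot all_order all_algebra.
From mathcomp Require Import reals trigo.
From mathcomp Require Import complex.
From mathcomp Require Import ring lra zify.
Import Order.TTheory GRing.Theory Num.Theory.
Local Open Scope ring_scope.

Lemma count_sub_in (T : eqType) (P Q : pred T) (s : seq T) :
  {in s, forall x, P x -> Q x} -> (count P s <= count Q s)%N.
Proof.
move=> H; rewrite -(@eq_in_count _ (fun x => P x && Q x)); last first.
  by move=> x xs /=; case Px: (P x) => //=; rewrite (H x xs Px).
by apply: sub_count => x /andP[].
Qed.

Lemma count_iota_lt a b k : (a <= k <= a + b)%N ->
  count (fun j => (j < k)%N) (iota a b) = (k - a)%N.
Proof.
move=> /andP[ak kab].
have -> : b = ((k - a) + (a + b - k))%N by lia.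
rewrite iotaD count_cat.
rewrite (@eq_in_count _ _ predT); last by move=> j; rewrite mem_iota => /andP[_ h]; apply: leq_trans h _; lia.
rewrite (@eq_in_count _ (fun j => (j < k)%N) pred0); last first.
  by move=> j; rewrite mem_iota => /andP[h _] /=; apply/negbTE/negP => hlt; lia.
by rewrite count_predT count_pred0 size_iota addn0.
Qed.

Section ListFacts.
Variable R : realDomainType.

Lemma nth_sorted_count (S : seq R) (x : R) (k : nat) :
  sorted (fun a b : R => b <= a) S ->
  (count (fun y => (x < y)%R) S <= k)%N ->
  (k < count (fun y => (x <= y)%R) S)%N ->
  nth 0 S k = x.
Proof.
move=> sS c1 c2.
have kS : (k < size S)%N by apply: leq_trans c2 (count_size _ _).
have trans : transitive (fun a b : R => b <= a).
  by move=> a b c ab bc; apply: le_trans bc ab.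
have refl : reflexive (fun a b : R => b <= a) by move=> a; exact: lexx.
have Hle := @sorted_leq_nth R _ trans refl 0 S sS.
case: (ltgtP (nth 0 S k) x) => // H.
- (* y < x : all i >= k below x *)
  exfalso; move: c2; apply/negP; rewrite -leqNgt.
  rewrite -(cat_take_drop k S) count_cat.
  have -> : count (fun y => x <= y) (drop k S) = 0%N.
    apply/eqP; rewrite -leqn0 leqNgt -has_count; apply/negP => /hasP [y yin xy].
    move: yin => /(nthP 0) [i ilt eqy].
    rewrite nth_drop size_drop in eqy ilt.
    have : nth 0 S (k + i) <= nth 0 S k.
      move: ilt; rewrite ltn_subRL => ilt; apply: Hle; rewrite ?inE; [exact: kS|exact: ilt|exact: leq_addr].
    rewrite eqy => yk; move: (le_lt_trans yk H); rewrite ltNge xy //.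
  rewrite addn0; apply: leq_trans (count_size _ _) _; rewrite size_take; case: ifP => //; lia.
- exfalso; move: c1; apply/negP; rewrite -ltnNge.
  rewrite -(cat_take_drop k.+1 S) count_cat.
  have Hall : all (fun y => x < y) (take k.+1 S).
    apply/(all_nthP 0) => i; rewrite size_take => ilt.
    have ik : (i <= k)%N.
      move: ilt; case: (ltnP k.+1 (size S)) => c h; first by rewrite -ltnS.
      by rewrite -ltnS (leq_trans h c).
    rewrite nth_take ?ltnS //.
    apply: lt_le_trans H _; apply: Hle; rewrite ?inE //; apply: leq_ltn_trans ik kS.
  move: Hall; rewrite all_count => /eqP ->; rewrite size_take.
  have -> : (if (k.+1 < size S)%N then k.+1 else size S) = k.+1.
    by case: ltnP => // h; apply/eqP; rewrite eqn_leq h kS.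
  by rewrite addSn ltnS leq_addr.
Qed.
End ListFacts.

Section Trig.
Variable R : realType.
Variable n : nat.

Lemma phiE k : phi_ n k = k%:R * (pi / n.+1%:R) :> R.
Proof. by rewrite /phi_ mulrA. Qed.

Lemma pin_gt0 : 0 < pi / n.+1%:R :> R.
Proof. by apply: divr_gt0; [exact: pi_gt0 | rewrite ltr0n]. Qed.

Lemma phi_range k : (k <= n.+1)%N -> 0 <= (phi_ n k : R) <= pi.
Proof.
move=> kn; rewrite phiE; apply/andP; split.
  by apply: mulr_ge0; [exact: ler0n | exact: ltW pin_gt0].
rewrite mulrA ler_pdivrMr ?ltr0n // mulrC ler_wpM2l ?ler_nat //.
exact: pi_ge0.
Qed.

Lemma phi_ltE i j : (phi_ n i < phi_ n j :> R) = (i < j)%N.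
Proof. by rewrite !phiE ltr_pM2r ?pin_gt0 // ltr_nat. Qed.

Lemma cos_phi_ltE i j : (i <= n.+1)%N -> (j <= n.+1)%N ->
  (cos (phi_ n i) < cos (phi_ n j) :> R) = (j < i)%N.
Proof.
move=> hi hj; rewrite ltr_cos ?phi_ltE // in_itv /=; exact: phi_range.
Qed.

Lemma cos_phi_leE i j : (i <= n.+1)%N -> (j <= n.+1)%N ->
  (cos (phi_ n i) <= cos (phi_ n j) :> R) = (j <= i)%N.
Proof.
by move=> hi hj; rewrite leNgt cos_phi_ltE // -leqNgt.
Qed.

End Trig.

Section Count.
Variable R : realType.

Lemma count_L (n m : nat) (c : R) (P : pred R) :
  count P ([seq cos (phi_ n j) | j <- iota 1 n] ++ nseq m c) =
  (count (fun j => P (cos (phi_ n j))) (iota 1 n) + P c * m)%N.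
Proof. by rewrite count_cat count_map count_nseq. Qed.

Lemma final_cases (n m : nat) (c : R) (S : seq R) (k : nat) :
  (1 <= k <= n)%N ->
  sorted (fun a b : R => b <= a) S ->
  (forall P : pred R, count P S = count P ([seq cos (phi_ n j) | j <- iota 1 n] ++ nseq m c)) ->
  [/\ ((m < k)%N -> c > cos (phi_ n (k - m)) -> nth 0 S k.-1 = cos (phi_ n (k - m))),
      (~ (c <= cos (phi_ n k)) -> ~ ((m < k)%N /\ c > cos (phi_ n (k - m))) -> nth 0 S k.-1 = c) &
      (c <= cos (phi_ n k) -> nth 0 S k.-1 = cos (phi_ n k))].
Proof.
move=> /andP[k1 kn] sS hc.
have inI j : j \in iota 1 n -> (j <= n.+1)%N by rewrite mem_iota; lia.
split.
- move=> mk cx; apply: nth_sorted_count => //; rewrite hc count_L.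
  + rewrite (@eq_in_count _ _ (fun j => (j < k - m)%N)); last first.
      by move=> j /inI jn /=; rewrite cos_phi_ltE //; lia.
    by rewrite count_iota_lt ?cx /=; lia.
  + rewrite (@eq_in_count _ _ (fun j => (j < (k - m).+1)%N)); last first.
      by move=> j /inI jn /=; rewrite cos_phi_leE //; lia.
    by rewrite count_iota_lt ?(ltW cx) /=; lia.
- move=> nD nC; have ck : cos (phi_ n k) < c by rewrite ltNge; apply/negP.
  apply: nth_sorted_count => //; rewrite hc count_L.
  + rewrite ltxx mul0n addn0.
    apply: leq_trans (@count_sub_in _ _ (fun j => (j < k)%N) _ _) _.
      move=> j /inI jn /= cj; rewrite -(@cos_phi_ltE R n k j) //; last by lia.
      by apply: lt_trans ck cj.
    by rewrite count_iota_lt //; lia.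
  + rewrite lexx /= mul1n.
    case: (ltnP m k) => mk; last by lia.
    have cm : c <= cos (phi_ n (k - m)).
      by rewrite leNgt; apply/negP => h; apply: nC.
    apply: leq_trans (leq_add (@count_sub_in _ (fun j => (j < (k - m).+1)%N) _ _ _) (leqnn m)).
      by rewrite count_iota_lt //; lia.
    move=> j /inI jn /= hj; apply: le_trans cm _; rewrite cos_phi_leE //; lia.
- move=> cD; apply: nth_sorted_count => //; rewrite hc count_L.
  + rewrite (@eq_in_count _ _ (fun j => (j < k)%N)); last first.
      by move=> j /inI jn /=; rewrite cos_phi_ltE //; lia.
    by rewrite count_iota_lt ?ltNge ?cD /=; lia.
  + rewrite (@eq_in_count _ _ (fun j => (j < k.+1)%N)); last first.
      by move=> j /inI jn /=; rewrite cos_phi_leE //; lia.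
    by rewrite count_iota_lt //; lia.
Qed.
End Count.

Section Mx.
Variable R : realType.
Local Notation C := (R[i]).

Lemma Re_expi (t : R) : (expi t + (expi t)^*) / 2%:R = (cos t)%:C%C.
Proof. by rewrite -ReE -complexRe. Qed.

Lemma ReMx_T0 (n m : nat) (alpha beta : C) (psi theta : R) :
  ReMx (expi theta *: T0 n m alpha beta psi) =
  block_mx (ReMx ((expi theta * expi (- psi)) *: jordan0 n)) 0 0
           ((cabs (beta - alpha) * cos theta)%:C%C%:M).
Proof.
rewrite /ReMx /adjmx /T0 /dsum scale_block_mx !map_block_mx tr_block_mx.
rewrite add_block_mx scale_block_mx !scaler0 !map_mx0 !trmx0 !addr0 scaler0 scalerA.
congr block_mx; first by rewrite scaler0.
apply/matrixP => i j; rewrite !mxE.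
case: (eqVneq i j) => [_|_]; last by rewrite !mulr0n mulr0 rmorph0 addr0 mulr0.
rewrite !mulr1n rmorphM /= (conj_Creal (x := (_)%:C%C)) ?complex_real //.
rewrite -mulrDl mulrA [2^-1 * _]mulrC Re_expi -rmorphM mulrC.
by [].
Qed.
End Mx.

Section Eig.
Variable R : realType.
Local Notation C := (R[i]).

Lemma norm_expi (t : R) : `|expi t| = 1.
Proof.
rewrite normc_def /expi /= cos2Dsin2 sqrtr1 //.
Qed.

Lemma expi_conj (t : R) : expi t * (expi t)^* = 1.
Proof. by rewrite -normCK norm_expi expr1n. Qed.

Lemma sum_sh1 (f : nat -> C) n l :
  \sum_(i < n) f i * (l == i.+1)%:R = if (0 < l <= n)%N then f l.-1 else 0.
Proof.
elim: n => [|n IH]; first by rewrite big_ord0; case: l.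
rewrite big_ord_recr /= IH.
case: (ltngtP l n.+1) => h.
- by rewrite mulr0 addr0 -(ltnS l n) h andbT.
- by rewrite mulr0 addr0 andbF (leqNgt l n) (ltnW h) andbF.
- by rewrite h /= ltnn mulr1 add0r.
Qed.

Lemma sum_sh2 (f : nat -> C) n l :
  \sum_(i < n) f i * ((i : nat) == l.+1)%:R = if (l.+1 < n)%N then f l.+1 else 0.
Proof.
elim: n => [|n IH]; first by rewrite big_ord0.
rewrite big_ord_recr /= IH.
case: (ltngtP l.+1 n) => h.
- by rewrite mulr0 addr0 ltnS (ltnW h).
- by rewrite mulr0 addr0 ltnS leqNgt h.
- by rewrite -h mulr1 add0r ltnSn.
Qed.

Lemma A_entry (w : C) n (i l : 'I_n) :
  ReMx (w *: jordan0 n) i l =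
  2^-1 * (w * ((l : nat) == i.+1)%:R + w^* * ((i : nat) == l.+1)%:R).
Proof.
rewrite /ReMx /adjmx !mxE rmorphM /=.
by case: eqP => _; case: eqP => _; rewrite /= ?rmorph0 ?rmorph1.
Qed.

Lemma sin_natpi (j : nat) : sin (j%:R * pi) = 0 :> R.
Proof.
elim: j => [|j IH]; first by rewrite mul0r sin0.
by rewrite -addn1 natrD mulrDl mul1r sinDpi IH oppr0.
Qed.

Lemma sin_id (l : nat) (t : R) :
  sin (l%:R * t) + sin (l.+2%:R * t) = 2 * cos t * sin (l.+1%:R * t).
Proof.
have -> : (l.+2)%:R * t = (l.+1)%:R * t + t by rewrite -addn1 natrD mulrDl mul1r.
have -> : l%:R * t = (l.+1)%:R * t - t by rewrite -addn1 natrD mulrDl mul1r addrK.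
rewrite sinB sinD; ring.
Qed.

Lemma eig_root (w : C) (hw : w^* * w = 1) n j : (1 <= j <= n)%N ->
  root (char_poly (ReMx (w *: jordan0 n))) (cos (phi_ n j))%:C%C.
Proof.
move=> /andP[j1 jn].
rewrite -eigenvalue_root_char; apply/eigenvalueP.
set t := phi_ n j.
pose s (p : nat) : C := (sin (p%:R * t))%:C%C.
pose f (i : nat) : C := w ^+ i * s i.+1.
exists (\row_(l < n) f l).
- apply/rowP => l; rewrite !mxE.
  under eq_bigr => i _ do rewrite A_entry mxE.
  transitivity (2^-1 * (w * \sum_(i < n) f i * ((l : nat) == i.+1)%:R +
                        w^* * \sum_(i < n) f i * ((i : nat) == l.+1)%:R)).
    rewrite !big_distrr -big_split big_distrr; apply: eq_bigr => i _ /=; ring.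
  rewrite sum_sh1 sum_sh2.
  have e1 : w * (if (0 < l <= n)%N then f l.-1 else 0) = w ^+ l * s l.
    have lt := ltn_ord l; case: (nat_of_ord l) lt => [|l'] lt /=.
      by rewrite /s mul0r sin0 !mulr0.
    by rewrite (ltnW lt) /f mulrA -exprS.
  have e2 : w^* * (if (l.+1 < n)%N then f l.+1 else 0) = w ^+ l * s l.+2.
    case: ifP => h; first by rewrite /f mulrA exprS mulrA hw mul1r.
    have -> : l.+2 = n.+1 by move: (ltn_ord l) h; lia.
    have hz : sin (n.+1%:R * t) = 0 :> R.
      rewrite /t phiE.
      have -> : n.+1%:R * (j%:R * (pi / n.+1%:R)) = j%:R * pi :> R.
        by field; rewrite addrC natr1 pnatr_eq0.
      exact: sin_natpi.
    by rewrite /s hz mulr0; apply/esym/mulr0.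
  rewrite !mulrDr e1 e2 -mulrDr.
  have : (sin (l%:R * t) + sin (l.+2%:R * t))%:C%C = (2 * cos t * sin (l.+1%:R * t))%:C%C.
    by rewrite sin_id.
  rewrite !rmorphD !rmorphM /= -/(s _) -/(s _) -/(s _) => H.
  have h2 : (2 : R)%:C%C = 2 by apply/eqP; rewrite eq_complex /= addr0 !eqxx.
  by rewrite -mulrDr H h2 /f; field.
- have st : 0 < sin t.
    apply: sin_gt0_pi; apply/andP; split.
      by rewrite /t -(phi_ltE R n 0 j) /phi_ !mul0r in j1.
    have : phi_ n j < phi_ n n.+1 :> R by rewrite phi_ltE ltnS.
    have -> : phi_ n n.+1 = pi :> R by rewrite /phi_; field; rewrite addrC natr1 pnatr_eq0.
    by rewrite -/t.
  apply/negP => /eqP HH; move: (congr1 (fun M : 'rV[C]_n => M 0 (Ordinal (leq_trans j1 jn))) HH).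
  rewrite !mxE /f /s expr0 mul1r => /(congr1 (@complex.Re R)) /=.
  rewrite mul1r => h; move: st; rewrite h ltxx //.
Qed.
End Eig.

Section Final.
Variable R : realType.
Local Notation C := (R[i]).

Lemma conj_w (theta psi : R) :
  (expi theta * expi (- psi))^* * (expi theta * expi (- psi)) = 1.
Proof.
rewrite rmorphM /=.
have h1 := @expi_conj R theta; have h2 := @expi_conj R (- psi).
transitivity ((expi theta * (expi theta)^*) * (expi (- psi) * (expi (- psi))^*)).
  by ring.
by rewrite h1 h2 mulr1.
Qed.

Lemma charA (w : C) (hw : w^* * w = 1) n :
  char_poly (ReMx (w *: jordan0 n)) =
  \prod_(z <- [seq (cos (phi_ n j))%:C%C | j <- iota 1 n]) ('X - z%:P).
Proof.
set p := char_poly _.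
rewrite {1}(@all_roots_prod_XsubC _ p [seq (cos (phi_ n j))%:C%C | j <- iota 1 n]).
- by rewrite (monicP (char_poly_monic _)) scale1r.
- by rewrite size_char_poly size_map size_iota.
- apply/allP => z /mapP [j jin ->]; apply: eig_root => //.
  by move: jin; rewrite mem_iota; lia.
- rewrite uniq_rootsE map_inj_in_uniq ?iota_uniq //.
  move=> i j; rewrite !mem_iota => hi hj /complexI e.
  have hi' : (i <= n.+1)%N by lia.
  have hj' : (j <= n.+1)%N by lia.
  apply/eqP; rewrite eqn_leq -(@cos_phi_leE R n i j hi' hj') -(@cos_phi_leE R n j i hj' hi') e lexx //.
Qed.

Lemma charM (w : C) (hw : w^* * w = 1) n m (c : R) :
  char_poly (block_mx (ReMx (w *: jordan0 n)) 0 0 (c%:C%C%:M : 'M[C]_m)) =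
  \prod_(z <- [seq (cos (phi_ n j))%:C%C | j <- iota 1 n] ++ nseq m c%:C%C) ('X - z%:P).
Proof.
rewrite /char_poly char_block_diag_mx det_ublock -!/(char_poly _) charA // big_cat /=.
congr (_ * _).
rewrite char_poly_trig ?scalar_mx_is_trig // big_nseq.
under eq_bigr => i _ do rewrite mxE eqxx mulr1n.
by rewrite big_const_ord.
Qed.

Lemma lam_counts (w : C) (hw : w^* * w = 1) n m (c : R) (P : pred R) :
  count P (lam_desc (block_mx (ReMx (w *: jordan0 n)) 0 0 (c%:C%C%:M : 'M[C]_m))) =
  count P ([seq cos (phi_ n j) | j <- iota 1 n] ++ nseq m c).
Proof.
rewrite /lam_desc count_sort /eigs_mult.
case: (closed_field_poly_normal _) => s /= hs.
have pe : perm_eq s ([seq (cos (phi_ n j))%:C%C | j <- iota 1 n] ++ nseq m c%:C%C).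
  apply: prod_XsubC_eq; rewrite -(@charM w hw n m c).
  by rewrite [RHS]hs (monicP (char_poly_monic _)) scale1r.
rewrite count_map (permP pe) -count_map map_cat -map_comp map_nseq /=.
by congr count; congr (_ ++ _); apply: eq_map.
Qed.

End Final.

Theorem lemma3p1 (R : realType) (n m : nat) (alpha beta : R[i]) (psi : R)
  (hn : (2 <= n)%N) (hm : (1 <= m)%N)
  (hpsi : beta - alpha = (cabs (beta - alpha))%:C%C * expi psi)
  (k : nat) (hk : (1 <= k <= n)%N) (theta : R)
  (htheta : 0 <= theta <= 2 * pi) :
  let r := cabs (beta - alpha) in
  let lk := lam (ReMx (expi theta *: T0 n m alpha beta psi)) k in
  (Cset r n k m theta -> lk = cos (psi_ n k m)) /\
  (~ Dset r n k theta -> ~ Cset r n k m theta -> lk = r * cos theta) /\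
  (Dset r n k theta -> lk = cos (phi_ n k)).
Proof.
move=> r lk.
have hw := @conj_w R theta psi.
set c := r * cos theta.
have [F1 F2 F3] := @final_cases R n m c _ k hk (sort_sorted (fun a b => le_total b a) _) (@lam_counts R _ hw n m c).
have lkE : lk = nth 0 (lam_desc (block_mx (ReMx ((expi theta * expi (- psi)) *: jordan0 n)) 0 0
                     (c%:C%C%:M : 'M[R[i]]_m))) k.-1 by rewrite /lk /lam ReMx_T0.
have psiE : (m < k)%N -> psi_ n k m = phi_ n (k - m) :> R.
  by move=> mk; rewrite /psi_ /phi_ natrB // ltnW.
have CE : Cset r n k m theta <-> ((m < k)%N /\ c > cos (phi_ n (k - m))).
  rewrite /Cset; split=> -[mk h]; split=> //; by rewrite ?psiE // -?psiE.
rewrite lkE; split; [|split].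
- by move=> /CE [mk h]; rewrite psiE // F1.
- by move=> nD nC; apply: F2 => // h; apply: nC; apply/CE.
- by move=> hD; apply: F3.
Qed.
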